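(* Let $b$ be an angular kernel on $S^{d-1}$ and $c_K,C_P>0$. Assume that for every smooth $f:S^{d-1}\to(0,\infty)$ with $f(\sigma)=f(-\sigma)$, \[\int_{S^{d-1}}\Gamma^2_{\mathcal B,\Delta}(\log f,\log f)f\,d\sigma\ge c_K\int_{S^{d-1}}\frac{|\nabla f|^2}{f}d\sigma\quad\text{and}\quad C_P\int_{S^{d-1}}|\nabla f|^2d\sigma\ge\iint_{S^{d-1}\times S^{d-1}}(f(\sigma')-f(\sigma))^2b(\sigma'\cdot\sigma)d\sigma'd\sigma.\] Then for every such $f$, \[\int_{S^{d-1}}\Gamma^2_{\mathcal B,\Delta}(\log f,\log f)f\,d\sigma\ge\frac{2c_K}{C_P}\iint_{S^{d-1}\times S^{d-1}}\frac{(f(\sigma')-f(\sigma))^2}{f(\sigma')+f(\sigma)}b(\sigma'\cdot\sigma)d\sigma'd\sigma,\] i.e. $\Lambda_b\ge 2c_K/C_P$.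
   Context: An angular kernel is $b:[-1,1]\to[0,\infty)$ with $\int(1-(e\cdot\sigma)^2)b(e\cdot\sigma)d\sigma<\infty$. $\mathcal Bg(\sigma)=\int_{S^{d-1}}(g(\sigma')-g(\sigma))b(\sigma'\cdot\sigma)d\sigma'$; $\Gamma_\Delta(g,h)=\nabla g\cdot\nabla h$ (spherical gradient); $\Gamma^2_{\mathcal B,\Delta}(g,h)=\frac12(\mathcal B\Gamma_\Delta(g,h)-\Gamma_\Delta(\mathcal Bg,h)-\Gamma_\Delta(g,\mathcal Bh))$. $\Lambda_b$ is the largest constant for which the displayed conclusion holds for all even positive smooth $f$. *)

(* Defs.v *)
From HB Require Import structures.
From mathcomp Require Import all_boot all_order all_algebra.
From mathcomp Require Import all_classical all_reals all_analysis.
Set Implicit Arguments. Unset Strict Implicit. Unset Printing Implicit Defensive.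
Import Order.TTheory GRing.Theory Num.Theory.
Import numFieldNormedType.Exports.
Local Open Scope classical_set_scope.
Local Open Scope ring_scope.

Section Sphere.
Variable R : realType.
Variable d : nat.

Notation vec := 'rV[R]_d.

Definition dotv (u v : vec) : R := \sum_(i < d) u 0 i * v 0 i.
Definition enorm (x : vec) : R := Num.sqrt (dotv x x).

Definition on_sphere (x : vec) : Prop := enorm x = 1.

(* radial projection x |-> x/|x| (0-homogeneous extension of sphere functions) *)
Definition hext (f : vec -> R) : vec -> R := fun x => f ((enorm x)^-1 *: x).

Definition vec_of_seq (s : seq R) : vec := \row_(i < d) nth 0 s i.

Fixpoint iintR (n : nat) (H : seq R -> R) : R :=
  match n with
  | 0%N => H [::]
  | n'.+1 => Rintegral lebesgue_measure `[-1, 1]%classic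
               (fun t => iintR n' (fun s => H (t :: s)))
  end.

Fixpoint iintE (n : nat) (H : seq R -> \bar R) : \bar R :=
  match n with
  | 0%N => H [::]
  | n'.+1 => (\int[lebesgue_measure]_(t in `[(-1)%R, 1%R]%classic)
               iintE n' (fun s => H (t :: s)))%E
  end.

(* Integral over S^{d-1} w.r.t. the surface measure, via the cone formula
   int_{S^{d-1}} g dsigma = d * int_{B_1 \ {0}} g(x/|x|) dx. *)
Definition sphere_int (g : vec -> R) : R :=
  d%:R * iintR d (fun s => let x := vec_of_seq s in
                   if (x != 0) && (enorm x <= 1) then g ((enorm x)^-1 *: x) else 0).

Definition sphere_intE (g : vec -> \bar R) : \bar R :=
  (d%:R%:E * iintE d (fun s => let x := vec_of_seq s in
                   if (x != 0%R) && (enorm x <= 1)%R then g ((enorm x)^-1 *: x)%R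
                   else 0%E))%E.

Fixpoint iterD (vs : seq vec) (F : vec -> R) : vec -> R :=
  match vs with
  | [::] => F
  | v :: vs' => fun x => derive (iterD vs' F) x v
  end.

Definition smooth_on (U : set vec) (F : vec -> R) : Prop :=
  forall (vs : seq vec) (x : vec), U x -> differentiable (iterD vs F) x.

Definition sphere_smooth (f : vec -> R) : Prop :=
  smooth_on [set x | x != 0] (hext f).

Definition even_pos_smooth (f : vec -> R) : Prop :=
  sphere_smooth f /\ (forall s, on_sphere s -> 0 < f s)
  /\ (forall s, on_sphere s -> f s = f (- s)).

(* spherical gradient = Euclidean gradient of the 0-homogeneous extension *)
Definition sgrad (f : vec -> R) (s : vec) : vec :=
  \row_(i < d) derive (hext f) s (delta_mx 0 i).

Definition Gamma_Delta (g h : vec -> R) : vec -> R :=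
  fun s => dotv (sgrad g s) (sgrad h s).

(* B g (sigma) = int (g(sigma') - g(sigma)) b(sigma'.sigma) dsigma',
   understood as a principal value (cut-off near sigma'.sigma = +-1) *)
Definition Bop (b : R -> R) (g : vec -> R) : vec -> R :=
  fun s => lim (sphere_int (fun s' =>
               if `|dotv s' s| <= 1 - eps then (g s' - g s) * b (dotv s' s)
               else 0) @[eps --> 0^'+]).

Definition Gamma2 (b : R -> R) (g h : vec -> R) : vec -> R :=
  fun s => 2^-1 * (Bop b (Gamma_Delta g h) s
                   - Gamma_Delta (Bop b g) h s - Gamma_Delta g (Bop b h) s).

Definition angular_kernel (b : R -> R) : Prop :=
  measurable_fun (`[-1, 1]%classic : set R) b /\
  (forall t, -1 <= t <= 1 -> 0 <= b t) /\
  (forall e : vec, on_sphere e ->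
     (sphere_intE (fun s => ((1 - (dotv e s)^+2) * b (dotv e s))%:E) < +oo)%E).

End Sphere.

(* Main.v *)
Require Import Defs.
From HB Require Import structures.
From mathcomp Require Import all_boot all_order all_algebra.
From mathcomp Require Import all_classical all_reals all_analysis.
From mathcomp Require Import ring lra.
Import Order.TTheory GRing.Theory Num.Theory.
Import numFieldNormedType.Exports.
Local Open Scope classical_set_scope.
Local Open Scope ring_scope.
Section IntLemmas.
Import HBNNSimple.
Local Open Scope ereal_scope.
Context d' (T : measurableType d') (R : realType) (mu : {measure set T -> \bar R}).

Lemma nnint_le (f g : T -> \bar R) : (forall x, f x <= g x) ->
  ereal_sup [set sintegral mu h | h in [set h : {nnsfun T >-> R} | forall x, (h x)%:E <= f x]]
  <= ereal_sup [set sintegral mu h | h in [set h : {nnsfun T >-> R} | forall x, (h x)%:E <= g x]].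
Proof.
move=> fg; apply: ge_ereal_sup => _ [h hf <-]; apply: ereal_sup_ubound.
by exists h => // x; apply: le_trans (hf x) (fg x).
Qed.

Lemma integral_le_gen D (f g : T -> \bar R) : (forall x, D x -> f x <= g x) ->
  \int[mu]_(x in D) f x <= \int[mu]_(x in D) g x.
Proof.
move=> fg; rewrite /integral; apply: leeB; apply: nnint_le => x;
  rewrite ?funeposE ?funenegE /patch /=; case: ifPn => [|_] //=; rewrite inE => Dx.
- exact: (@le_max2 _ (\bar R) (f x) 0 (g x) 0 (fg x Dx) (lexx _)).
- by apply: (@le_max2 _ (\bar R) _ 0 _ 0 _ (lexx _)); rewrite leeN2 fg.
Qed.

Lemma nnint_scale_le (k : R) (f : T -> \bar R) : (0 < k)%R ->
  ereal_sup [set sintegral mu h | h in [set h : {nnsfun T >-> R} | forall x, (h x)%:E <= k%:E * f x]]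
  <= k%:E * ereal_sup [set sintegral mu h | h in [set h : {nnsfun T >-> R} | forall x, (h x)%:E <= f x]].
Proof.
move=> k0; apply: ge_ereal_sup => _ [h hf <-].
have ki0 : (0 <= k^-1)%R by rewrite invr_ge0 ltW.
pose h' := scale_nnsfun h ki0.
have e1 : sintegral mu h' = (k^-1)%:E * sintegral mu h by exact: sintegralrM.
have -> : sintegral mu h = k%:E * sintegral mu h'.
  by rewrite e1 muleA -EFinM divff ?gt_eqF // mul1e.
rewrite lee_pmul2l // ?lte_fin //; apply: ereal_sup_ubound; exists h' => // x.
have -> : h' x = (k^-1 * h x)%R by [].
have := hf x; case: (f x) => [r| |] //=; rewrite ?lee_fin.
- by move=> hr; rewrite ler_pdivrMl //.
- by rewrite leey.
- by rewrite mulrNy gtr0_sg // mul1e leeNy_eq.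
Qed.

Lemma nnint_scale (k : R) (f : T -> \bar R) : (0 < k)%R ->
  ereal_sup [set sintegral mu h | h in [set h : {nnsfun T >-> R} | forall x, (h x)%:E <= k%:E * f x]]
  = k%:E * ereal_sup [set sintegral mu h | h in [set h : {nnsfun T >-> R} | forall x, (h x)%:E <= f x]].
Proof.
move=> k0; apply/eqP; rewrite eq_le nnint_scale_le //=.
have ki0 : (0 < k^-1)%R by rewrite invr_gt0.
have := @nnint_scale_le (k^-1) (fun x => k%:E * f x) ki0.
have E x : k^-1%:E * (k%:E * f x) = f x.
  by rewrite muleA -EFinM mulVf ?gt_eqF // mul1e.
have -> : [set h : {nnsfun T >-> R} | forall x, (h x)%:E <= (k^-1)%:E * (k%:E * f x)]
   = [set h | forall x, (h x)%:E <= f x].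
  by apply/seteqP; split => h /= H x; [rewrite -E|rewrite E]; apply: H.
move=> H; rewrite -(@lee_pmul2l _ (k^-1)%:E) // ?lte_fin //.
by rewrite muleA -EFinM mulVf ?gt_eqF // mul1e.
Qed.

Lemma muleBr_pos (k : R) (a b : \bar R) : (0 < k)%R ->
  k%:E * (a - b) = k%:E * a - k%:E * b.
Proof.
move=> k0; have k0' : 0 < k%:E by rewrite lte_fin.
case: a => [a| |]; case: b => [b| |] /=;
  rewrite ?gt0_muley ?gt0_muleNy //= -?EFinM -?EFinN ?gt0_muley ?gt0_muleNy //=.
by rewrite mulrBr.
Qed.
Lemma integral_scale (k : R) D (f : T -> \bar R) : (0 < k)%R ->
  \int[mu]_(x in D) (k%:E * f x) = k%:E * \int[mu]_(x in D) f x.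
Proof.
move=> k0; rewrite /integral muleBr_pos //.
have kf : (k%:E \is a fin_num) by [].
have p0 : (point : \bar R) = 0 by [].
have k0' : 0 <= k%:E by rewrite lee_fin ltW.
congr (_ - _); rewrite -nnint_scale //; congr ereal_sup; congr image; apply/funext => h;
  apply/propext; split => H x; move: (H x); rewrite ?funeposE ?funenegE /patch /=;
  case: ifPn => _; rewrite ?p0 ?oppe0 ?mule0; rewrite ?maxe_pMr // ?mule0 //; rewrite -?muleN //.
Qed.

Lemma Rintegral_scale (k : R) D (f : T -> R) : (0 < k)%R ->
  Rintegral mu D (fun x => k * f x)%R = (k * Rintegral mu D f)%R.
Proof.
move=> k0; rewrite /Rintegral.
rewrite (_ : (fun x => (k * f x)%:E) = (fun x => k%:E * (f x)%:E)); last first.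
  by apply/funext => x; rewrite EFinM.
rewrite integral_scale //.
by case: (\int[mu]_(x in D) (f x)%:E) => [r| |] //=; rewrite ?gt0_muley ?gt0_muleNy ?lte_fin //= mulr0.
Qed.
End IntLemmas.
Section Geo.
Variable R : realType.
Variable d : nat.
Notation vec := 'rV[R]_d.

Lemma dotv_ge0 (x : vec) : 0 <= dotv x x.
Proof. by rewrite /dotv; apply: sumr_ge0 => i _; rewrite -expr2 sqr_ge0. Qed.

Lemma dotvZ (c : R) (x y : vec) : dotv (c *: x) (c *: y) = c ^+ 2 * dotv x y.
Proof. by rewrite /dotv mulr_sumr; apply: eq_bigr => i _; rewrite !mxE; ring. Qed.

Lemma dotv_gt0 (x : vec) : x != 0 -> 0 < dotv x x.
Proof.
move=> nz; rewrite lt_def dotv_ge0 andbT; apply: contra nz => /eqP H.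
have := H; rewrite /dotv => /eqP; rewrite psumr_eq0; last by move=> i _; rewrite -expr2 sqr_ge0.
move=> /allP Hi; apply/eqP/matrixP => i j; rewrite !mxE (ord1 i).
have := Hi j (mem_index_enum j); rewrite mulf_eq0 orbb => /eqP //.
Qed.

Lemma enorm_gt0 (x : vec) : x != 0 -> 0 < enorm x.
Proof. by move=> nz; rewrite /enorm sqrtr_gt0 dotv_gt0. Qed.

Lemma normalized_on_sphere (x : vec) : x != 0 -> on_sphere ((enorm x)^-1 *: x).
Proof.
move=> nz; rewrite /on_sphere /enorm dotvZ exprVn sqr_sqrtr ?dotv_ge0 //.
by rewrite mulVf ?sqrtr1 // gt_eqF // dotv_gt0.
Qed.

Lemma on_sphere_dot (s : vec) : on_sphere s -> dotv s s = 1.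
Proof.
rewrite /on_sphere /enorm => H.
by rewrite -(sqr_sqrtr (dotv_ge0 s)) H expr1n.
Qed.

Lemma sphere_fix (s : vec) : on_sphere s -> (enorm s)^-1 *: s = s.
Proof. by rewrite /on_sphere => ->; rewrite invr1 scale1r. Qed.

Lemma sphere_nz (s : vec) : on_sphere s -> s != 0.
Proof.
move=> /on_sphere_dot H; apply/eqP => s0; move: H; rewrite s0 /dotv.
by rewrite big1 => [/esym/eqP|i _]; rewrite ?oner_eq0 // mxE mul0r.
Qed.

Lemma dotv_bound (u v : vec) : on_sphere u -> on_sphere v -> -1 <= dotv u v <= 1.
Proof.
move=> /on_sphere_dot uu /on_sphere_dot vv.
have e1 : \sum_(i < d) (u 0 i - v 0 i) ^+ 2 = dotv u u + dotv v v - 2 * dotv u v.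
  rewrite /dotv mulr_sumr -big_split -sumrB /=; apply: eq_bigr => i _; ring.
have e2 : \sum_(i < d) (u 0 i + v 0 i) ^+ 2 = dotv u u + dotv v v + 2 * dotv u v.
  rewrite /dotv mulr_sumr -!big_split /=; apply: eq_bigr => i _; ring.
have p1 : 0 <= \sum_(i < d) (u 0 i - v 0 i) ^+ 2 by apply: sumr_ge0 => i _; exact: sqr_ge0.
have p2 : 0 <= \sum_(i < d) (u 0 i + v 0 i) ^+ 2 by apply: sumr_ge0 => i _; exact: sqr_ge0.
rewrite e1 uu vv in p1; rewrite e2 uu vv in p2.
apply/andP; split; lra.
Qed.

Lemma sphere_int_eq (g1 g2 : vec -> R) : (forall s, on_sphere s -> g1 s = g2 s) ->
  sphere_int g1 = sphere_int g2.
Proof.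
move=> H; rewrite /sphere_int; congr (_ * _); congr iintR; apply/funext => s /=.
by case: ifP => // /andP[nz _]; apply: H; exact: normalized_on_sphere.
Qed.

Lemma iintE_le n (H1 H2 : seq R -> \bar R) : (forall s, (H1 s <= H2 s)%E) ->
  (iintE n H1 <= iintE n H2)%E.
Proof.
elim: n H1 H2 => [|n IH] H1 H2 H //=.
by apply: integral_le_gen => t _; apply: IH => s.
Qed.

Lemma sphere_intE_le (g1 g2 : vec -> \bar R) : (forall s, on_sphere s -> (g1 s <= g2 s)%E) ->
  (sphere_intE g1 <= sphere_intE g2)%E.
Proof.
move=> H; rewrite /sphere_intE; apply: lee_wpmul2l; first by rewrite lee_fin.
apply: iintE_le => s /=; case: ifP => // /andP[nz _]; apply: H.
exact: normalized_on_sphere.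
Qed.

Lemma iintR_scale n (k : R) (H : seq R -> R) : 0 < k ->
  iintR n (fun s => k * H s) = k * iintR n H.
Proof.
elim: n H => [|n IH] H k0 //=.
rewrite (_ : (fun t => iintR n (fun s => k * H (t :: s))) = (fun t => k * iintR n (fun s => H (t :: s)))).
  exact: Rintegral_scale.
by apply/funext => t; rewrite IH.
Qed.

Lemma sphere_int_scale (k : R) (g : vec -> R) : 0 < k ->
  sphere_int (fun s => k * g s) = k * sphere_int g.
Proof.
move=> k0; rewrite /sphere_int [RHS]mulrCA -(@iintR_scale d k _ k0); f_equal; f_equal.
by apply: funext => s /=; case: ifP; rewrite ?mulr0.
Qed.
End Geo.
Section Smooth1.
Variable R : realType.

Lemma near0_differentiable (V W : normedModType R) (h : V -> W) (x : V) :
  (\forall y \near x, h y = 0) -> differentiable h x.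
Proof.
move=> H.
have hx : h x = 0 := nbhs_singleton H.
have E : h \o shift x = cst (h x) + \0 +o_ 0 id.
  apply/eqaddoP => eps eps0.
  have := (nbhs0P _ x).1 H; apply: filterS => y /= hy.
  suff -> : (h \o +%R^~ x - (cst (h x) + \0)) y = 0 by rewrite normr0 mulr_ge0 // ltW.
  by change (h (y + x) - (h x + 0) = 0); rewrite [y + x]addrC hy hx !addr0 subrr.
have dh : 'd h x = 0 :> (V -> W).
  by apply/diff_unique => //; exact: cst_continuous.
apply/diff_locallyP; rewrite dh; split => //; exact: cst_continuous.
Qed.

Lemma near_eq_differentiable (V W : normedModType R) (f g : V -> W) (x : V) :
  (\forall y \near x, f y = g y) -> differentiable f x -> differentiable g x.
Proof.
move=> H df.
have -> : g = f + (g - f) by apply/funext => y /=; rewrite addrC subrK.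
apply: differentiableD => //; apply: near0_differentiable.
by apply: filterS H => y /= fg; change (g y - f y = 0); rewrite fg subrr.
Qed.

Variable d : nat.
Notation vec := 'rV[R]_d.

Lemma near_nz (x : vec) : x != 0 -> \forall y \near x, y != 0.
Proof.
move=> nz.
have oC : open (~` [set (0 : vec)]).
  apply: closed_openC; apply: accessible_closed_set1; apply: hausdorff_accessible.
  exact: norm_hausdorff.
have : (~` [set (0 : vec)]) x by move=> /= x0; rewrite x0 eqxx in nz.
move: oC; rewrite openE => /[apply] /= H.
by apply: filterS H => y /= ny; apply/eqP.
Qed.

Section Closure.
Variable U : set vec.
Hypothesis Unear : forall x, U x -> \forall y \near x, U y.

Variable Q : (vec -> R) -> Prop.
Hypothesis Qd : forall H, Q H -> forall x, U x -> differentiable H x.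
Hypothesis QD : forall H v, Q H -> exists H', Q H' /\ forall x, U x -> 'D_v H x = H' x.

Lemma smooth_key vs : forall H, Q H -> exists H', Q H' /\ forall x, U x -> Defs.iterD vs H x = H' x.
Proof.
elim: vs => [|v vs IH] H QH; first by exists H.
have [H1 [QH1 e1]] := IH H QH.
have [H2 [QH2 e2]] := QD H1 v QH1.
exists H2; split => // x Ux /=.
rewrite -e2 //; apply: near_eq_derive.
near=> y; apply: e1; near: y; exact: Unear Ux.
Unshelve. all: by end_near.
Qed.

Lemma smooth_closure H : Q H -> smooth_on U H.
Proof.
move=> QH vs x Ux.
have [H' [QH' e]] := smooth_key vs H QH.
apply: (@near_eq_differentiable _ _ H'); last exact: Qd.
near=> y; rewrite e //; near: y; exact: Unear Ux.
Unshelve. all: by end_near.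
Qed.
End Closure.
End Smooth1.
Section Smooth2.
Variable R : realType.
Variable d : nat.
Notation vec := 'rV[R]_d.

Lemma dD (f g : vec -> R) x v : differentiable f x -> differentiable g x ->
  'D_v (fun y => f y + g y) x = 'D_v f x + 'D_v g x.
Proof. by move=> df dg; apply: (@deriveD _ _ _ f g x v); exact: diff_derivable. Qed.

Lemma dM (f g : vec -> R) x v : differentiable f x -> differentiable g x ->
  'D_v (fun y => f y * g y) x = f x * 'D_v g x + g x * 'D_v f x.
Proof. by move=> df dg; apply: (@deriveM _ _ f g x v); exact: diff_derivable. Qed.

Lemma diffD' (f g : vec -> R) x : differentiable f x -> differentiable g x ->
  differentiable (fun y => f y + g y) x.
Proof. by move=> df dg; apply: (@differentiableD _ _ _ f g x). Qed.

Lemma diffM' (f g : vec -> R) x : differentiable f x -> differentiable g x ->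
  differentiable (fun y => f y * g y) x.
Proof. by move=> df dg; apply: (@differentiableM _ _ f g x). Qed.

Lemma diffcst (c : R) x : differentiable (fun _ : vec => c) x.
Proof. exact: (@differentiable_cst _ _ _ c x). Qed.

Lemma dcst (c : R) x v : 'D_v (fun _ : vec => c) x = 0.
Proof. exact: (@derive_cst _ _ _ c x v). Qed.

Lemma comp1 (F : vec -> R) (phi : R -> R) x a :
  differentiable F x -> is_derive (F x) 1 phi a ->
  differentiable (fun y => phi (F y)) x.
Proof.
move=> dF [dphi _]; apply: (@differentiable_comp _ _ _ _ F phi x dF).
exact/derivable1_diffP.
Qed.

Lemma dcomp1 (F : vec -> R) (phi : R -> R) x v a :
  differentiable F x -> is_derive (F x) 1 phi a ->
  'D_v (fun y => phi (F y)) x = a * 'D_v F x.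
Proof.
move=> dF dphi; have dc := @comp1 F phi x a dF dphi.
case: dphi => dphi <-.
have dphi' : differentiable phi (F x) by exact/derivable1_diffP.
rewrite (@deriveE _ _ _ _ x v dc) (@deriveE _ _ _ F x v dF).
rewrite (@diff_comp _ _ _ _ F phi x dF dphi') /=.
rewrite -[X in 'd phi (F x) X]mulr1 -[_ * 1]/(('d F x v) *: (1 : R)) linearZ /=.
by rewrite mulrC -derive1E' // derive1E.
Qed.
End Smooth2.
Section Smooth3.
Context {R : realType}.
Context {d : nat}.
Notation vec := 'rV[R]_d.
Context {U : set vec}.
Hypothesis Unear : forall x, U x -> \forall y \near x, U y.
Notation smooth := (smooth_on U).

Lemma iterD_D vs (G : vec -> R) v :
  Defs.iterD vs (fun x => 'D_v G x) = Defs.iterD (rcons vs v) G.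
Proof. by elim: vs => [|w vs IH] //=; rewrite IH. Qed.

Lemma smooth_D (G : vec -> R) v : smooth G -> smooth (fun x => 'D_v G x).
Proof. by move=> sG vs x Ux; rewrite iterD_D; exact: sG. Qed.

Lemma smooth_diff {G : vec -> R} {x} : smooth G -> U x -> differentiable G x.
Proof. by move=> sG Ux; exact: (sG [::] x Ux). Qed.

Lemma smooth_cst (c : R) : smooth (fun _ => c).
Proof.
apply: (@smooth_closure _ _ U Unear (fun H => exists c, H = fun _ => c)); last by exists c.
- by move=> H [c' ->] x _; exact: diffcst.
- move=> H v [c' ->]; exists (fun _ => 0); split; first by exists 0.
  by move=> x _; rewrite dcst.
Qed.

Lemma smooth_lift (H : vec -> R) : (forall x, U x -> differentiable H x) ->
  (forall v, exists G, smooth G /\ forall x, U x -> 'D_v H x = G x) -> smooth H.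
Proof.
move=> dH DH.
apply: (@smooth_closure _ _ U Unear (fun K => K = H \/ smooth K)); last by left.
- by move=> K [->|sK] x Ux; [exact: dH | exact: smooth_diff].
- move=> K v [->|sK].
    by have [G [sG e]] := DH v; exists G; split => //; right.
  by exists (fun x => 'D_v K x); split => //; right; exact: smooth_D.
Qed.

Definition sp (s : seq ((vec -> R) * (vec -> R))) : vec -> R :=
  fun x => \sum_(p <- s) p.1 x * p.2 x.

Fixpoint dser v (s : seq ((vec -> R) * (vec -> R))) :=
  match s with
  | [::] => [::]
  | p :: s' => (p.1, fun x => 'D_v p.2 x) :: (p.2, fun x => 'D_v p.1 x) :: dser v s'
  end.

Definition allsm (s : seq ((vec -> R) * (vec -> R))) :=
  forall p, List.In p s -> smooth p.1 /\ smooth p.2.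

Lemma sp_cons p s : sp (p :: s) = fun x => p.1 x * p.2 x + sp s x.
Proof. by apply/funext => x; rewrite /sp big_cons. Qed.

Lemma sp_nil : sp [::] = fun _ => 0.
Proof. by apply/funext => x; rewrite /sp big_nil. Qed.

Lemma allsm_cons {p s} : allsm (p :: s) -> [/\ smooth p.1, smooth p.2 & allsm s].
Proof.
move=> H; have [h1 h2] := H p (or_introl erefl); split => // q qs.
by apply: H; right.
Qed.

Lemma sp_diff s x : allsm s -> U x -> differentiable (sp s) x.
Proof.
elim: s => [|p s IH] H Ux; first by rewrite sp_nil; exact: diffcst.
have [h1 h2 hs] := allsm_cons H.
rewrite sp_cons; apply: diffD'; last exact: IH.
by apply: diffM'; apply: smooth_diff.
Qed.

Lemma sp_der s v x : allsm s -> U x -> 'D_v (sp s) x = sp (dser v s) x.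
Proof.
elim: s => [|p s IH] H Ux; first by rewrite sp_nil dcst.
have [h1 h2 hs] := allsm_cons H.
rewrite sp_cons dD; last exact: sp_diff.
  rewrite dM ?IH //; try exact: smooth_diff.
  by rewrite /= sp_cons /= sp_cons /= addrA.
by apply: diffM'; apply: smooth_diff.
Qed.

Lemma allsm_dser v s : allsm s -> allsm (dser v s).
Proof.
elim: s => [|p s IH] H //=.
have [h1 h2 hs] := allsm_cons H.
move=> q /= [<-|[<-|qs]] /=; first by split => //; exact: smooth_D.
  by split => //; exact: smooth_D.
exact: IH.
Qed.

Lemma smooth_sp s : allsm s -> smooth (sp s).
Proof.
move=> H.
apply: (@smooth_closure _ _ U Unear (fun K => exists s, allsm s /\ K = sp s)); last by exists s.
- by move=> K [s' [Hs ->]] x Ux; exact: sp_diff.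
- move=> K v [s' [Hs ->]]; exists (sp (dser v s')); split.
    by exists (dser v s'); split => //; exact: allsm_dser.
  by move=> x Ux; rewrite sp_der.
Qed.

Lemma smoothM (F G : vec -> R) : smooth F -> smooth G -> smooth (fun x => F x * G x).
Proof.
move=> sF sG.
have -> : (fun x => F x * G x) = sp [:: (F, G)].
  by apply/funext => x; rewrite /sp big_seq1.
by apply: smooth_sp => p /= [<-|[]].
Qed.

Lemma smoothD (F G : vec -> R) : smooth F -> smooth G -> smooth (fun x => F x + G x).
Proof.
move=> sF sG.
have -> : (fun x => F x + G x) = sp [:: (F, fun _ => 1); (fun _ => 1, G)].
  by apply/funext => x; rewrite /sp big_cons big_seq1 /= mulr1 mul1r.
by apply: smooth_sp => p /= [<-|[<-|[]]] //; split => //; exact: smooth_cst.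
Qed.

End Smooth3.
Section Smooth4.
Context {R : realType}.
Context {d : nat}.
Notation vec := 'rV[R]_d.
Context {U : set vec}.
Hypothesis Unear : forall x, U x -> \forall y \near x, U y.
Notation smooth := (smooth_on U).
Variable F : vec -> R.
Hypothesis sF : smooth F.
Hypothesis Fpos : forall x, U x -> 0 < F x.

Lemma diffinv x : U x -> differentiable (fun y => (F y)^-1) x.
Proof.
move=> Ux; apply: (@differentiableV _ _ F x); first exact: smooth_diff sF Ux.
by rewrite gt_eqF // Fpos.
Qed.

Lemma diffinvX m x : U x -> differentiable (fun y => (F y)^-1 ^+ m) x.
Proof.
move=> Ux; elim: m => [|m IH]; first exact: diffcst.
have -> : (fun y => (F y)^-1 ^+ m.+1) = (fun y => (F y)^-1 * (F y)^-1 ^+ m).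
  by apply/funext => y; rewrite exprS.
by apply: diffM' => //; exact: diffinv.
Qed.

Lemma dinv x v : U x -> 'D_v (fun y => (F y)^-1) x = - (F x)^-2 * 'D_v F x.
Proof.
move=> Ux; rewrite (@deriveV _ _ F x v) //.
- by rewrite gt_eqF // Fpos.
- exact: (@diff_derivable _ _ _ F x v (smooth_diff sF Ux)).
Qed.

Lemma dinvX m x v : U x -> 'D_v (fun y => (F y)^-1 ^+ m) x =
  - m%:R * (F x)^-1 ^+ m.+1 * 'D_v F x.
Proof.
move=> Ux; elim: m => [|m IH]; first by rewrite dcst; ring.
have -> : (fun y => (F y)^-1 ^+ m.+1) = (fun y => (F y)^-1 * (F y)^-1 ^+ m).
  by apply/funext => y; rewrite exprS.
rewrite dM; [|exact: diffinv|exact: diffinvX].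
rewrite IH dinv //.
have Fx0 : F x != 0 by rewrite gt_eqF // Fpos.
set a := 'D_v F x; set p := (F x)^-1 ^+ m.
rewrite !exprS -/p -[m.+1%:R]natr1 expr0 mulr1.
field; exact: Fx0.
Qed.

Lemma smooth_invX : forall m, smooth (fun x => (F x)^-1 ^+ m).
Proof.
have main : forall G m, smooth G -> smooth (fun x => G x * (F x)^-1 ^+ m).
  move=> G0 m0 sG0.
  apply: (@smooth_closure _ _ U Unear
    (fun H => exists G m, smooth G /\ H = fun x => G x * (F x)^-1 ^+ m)); last by exists G0, m0.
  - move=> H [G [m [sG ->]]] x Ux; apply: diffM'; first exact: smooth_diff sG Ux.
    exact: diffinvX.
  - move=> H v [G [m [sG ->]]].
    exists (fun x => ('D_v G x * F x + (- m%:R) * (G x * 'D_v F x)) * (F x)^-1 ^+ m.+1).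
    split.
      exists (fun x => 'D_v G x * F x + (- m%:R) * (G x * 'D_v F x)), m.+1; split => //.
      apply: (smoothD Unear (fun x => 'D_v G x * F x) (fun x => (- m%:R) * (G x * 'D_v F x))).
        by apply: (smoothM Unear (fun x => 'D_v G x) F) => //; exact: smooth_D.
      apply: (smoothM Unear (fun _ => - m%:R) (fun x => G x * 'D_v F x)); first exact: smooth_cst.
      by apply: (smoothM Unear G (fun x => 'D_v F x)) => //; exact: smooth_D.
    move=> x Ux; rewrite dM; [|exact: smooth_diff sG Ux|exact: diffinvX].
    rewrite dinvX //.
    have Fx0 : F x != 0 by rewrite gt_eqF // Fpos.
    set a := 'D_v F x; set b := 'D_v G x; set p := (F x)^-1 ^+ m.
    rewrite exprS -/p; field; exact: Fx0.
move=> m; have := main (fun _ => 1) m (smooth_cst Unear 1).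
by have -> : (fun x => 1 * (F x)^-1 ^+ m) = (fun x => (F x)^-1 ^+ m) by apply/funext => x; rewrite mul1r.
Qed.

Lemma smooth_inv : smooth (fun x => (F x)^-1).
Proof.
have := smooth_invX 1.
by have -> : (fun x => (F x)^-1 ^+ 1) = (fun x => (F x)^-1) by apply/funext => x; rewrite expr1.
Qed.

Lemma smooth_ln : smooth (fun x => ln (F x)).
Proof.
apply: (smooth_lift Unear).
  move=> x Ux; apply: (@comp1 _ _ F (@ln R) x (F x)^-1); first exact: smooth_diff sF Ux.
  exact: is_derive1_ln (Fpos x Ux).
move=> v; exists (fun x => (F x)^-1 * 'D_v F x); split.
  by apply: (smoothM Unear (fun x => (F x)^-1) (fun x => 'D_v F x)); [exact: smooth_inv | exact: smooth_D].
move=> x Ux; apply: (@dcomp1 _ _ F (@ln R) x v (F x)^-1); first exact: smooth_diff sF Ux.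
exact: is_derive1_ln (Fpos x Ux).
Qed.
End Smooth4.

Section Smooth5.
Context {R : realType}.
Context {d : nat}.
Notation vec := 'rV[R]_d.
Context {U : set vec}.
Hypothesis Unear : forall x, U x -> \forall y \near x, U y.
Notation smooth := (smooth_on U).

Lemma smooth_exp (L : vec -> R) : smooth L -> smooth (fun x => expR (L x)).
Proof.
move=> sL.
have main : forall G, smooth G -> smooth (fun x => G x * expR (L x)).
  move=> G0 sG0.
  apply: (@smooth_closure _ _ U Unear
    (fun H => exists G, smooth G /\ H = fun x => G x * expR (L x))); last by exists G0.
  - move=> H [G [sG ->]] x Ux; apply: diffM'; first exact: smooth_diff sG Ux.
    apply: (@comp1 _ _ L expR x (expR (L x))); first exact: smooth_diff sL Ux.
  - move=> H v [G [sG ->]].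
    exists (fun x => (G x * 'D_v L x + 'D_v G x) * expR (L x)); split.
      exists (fun x => G x * 'D_v L x + 'D_v G x); split => //.
      apply: (smoothD Unear (fun x => G x * 'D_v L x) (fun x => 'D_v G x)); last exact: smooth_D.
      by apply: (smoothM Unear G (fun x => 'D_v L x)) => //; exact: smooth_D.
    move=> x Ux; rewrite dM; [|exact: smooth_diff sG Ux|].
      rewrite (@dcomp1 _ _ L expR x v (expR (L x))); first by rewrite mulrDl; ring.
      exact: smooth_diff sL Ux.
    apply: (@comp1 _ _ L expR x (expR (L x))); exact: smooth_diff sL Ux.
have := main (fun _ => 1) (smooth_cst Unear 1).
by have -> : (fun x => 1 * expR (L x)) = (fun x => expR (L x)) by apply/funext => x; rewrite mul1r.
Qed.
End Smooth5.
Section MainAux.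
Context {R : realType}.
Context {d : nat}.
Notation vec := 'rV[R]_d.

Lemma key_ineq (a c : R) : 0 < a -> 0 < c ->
  (a ^+ 2 / 2 - c ^+ 2 / 2) ^+ 2 / (a ^+ 2 / 2 + c ^+ 2 / 2) <= (a - c) ^+ 2.
Proof.
move=> a0 c0; have den : 0 < a ^+ 2 / 2 + c ^+ 2 / 2.
  by apply: addr_gt0; apply: divr_gt0 => //; apply: exprn_gt0.
rewrite ler_pdivrMr // -subr_ge0.
have -> : (a - c) ^+ 2 * (a ^+ 2 / 2 + c ^+ 2 / 2) - (a ^+ 2 / 2 - c ^+ 2 / 2) ^+ 2
  = ((a - c) ^+ 2) ^+ 2 / 4 by field.
by apply: divr_ge0 => //; apply: sqr_ge0.
Qed.

Definition gsq (f : vec -> R) : vec -> R := fun x => expR (2^-1 * (ln 2 + ln (f x))).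

Lemma gsq_sqr (f : vec -> R) x : 0 < f x -> gsq f x ^+ 2 = 2 * f x.
Proof.
move=> fx; rewrite /gsq expr2 -expRD.
have -> : 2^-1 * (ln 2 + ln (f x)) + 2^-1 * (ln 2 + ln (f x)) = ln 2 + ln (f x).
  by field.
by rewrite expRD !lnK // posrE.
Qed.

Lemma gsq_pos (f : vec -> R) x : 0 < gsq f x.
Proof. exact: expR_gt0. Qed.

Lemma near_U (x : vec) : [set x : vec | x != 0] x ->
  \forall y \near x, [set x : vec | x != 0] y.
Proof. exact: near_nz. Qed.

Lemma hext_pos (f : vec -> R) : (forall s, on_sphere s -> 0 < f s) ->
  forall x, [set x : vec | x != 0] x -> 0 < hext f x.
Proof. by move=> fp x nz; apply: fp; exact: normalized_on_sphere. Qed.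

Lemma gsq_smooth (f : vec -> R) : sphere_smooth f -> (forall s, on_sphere s -> 0 < f s) ->
  sphere_smooth (gsq f).
Proof.
move=> sf fp.
have Fpos := hext_pos f fp.
have sL : smooth_on [set x : vec | x != 0] (fun x => 2^-1 * (ln 2 + ln (hext f x))).
  apply: (smoothM near_U (fun _ => 2^-1) (fun x => ln 2 + ln (hext f x))).
    exact: smooth_cst near_U _.
  apply: (smoothD near_U (fun _ => ln 2) (fun x => ln (hext f x))).
    exact: smooth_cst near_U _.
  exact: smooth_ln near_U _ sf Fpos.
rewrite /sphere_smooth (_ : hext (gsq f) = fun x => expR (2^-1 * (ln 2 + ln (hext f x)))) //.
exact: (smooth_exp near_U _ sL).
Qed.

Lemma gsq_grad (f : vec -> R) s : sphere_smooth f -> (forall s, on_sphere s -> 0 < f s) ->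
  on_sphere s ->
  dotv (sgrad (gsq f) s) (sgrad (gsq f) s) = 2^-1 * (dotv (sgrad f s) (sgrad f s) / f s).
Proof.
move=> sf fp ss.
have Fpos := hext_pos f fp.
have snz : [set x : vec | x != 0] s by exact: sphere_nz.
have Fs : hext f s = f s by rewrite /hext sphere_fix.
have dF : differentiable (hext f) s by exact: smooth_diff sf snz.
have fs0 : 0 < f s by exact: fp.
set L := fun x => 2^-1 * (ln 2 + ln (hext f x)).
have dlnF : differentiable (fun x => ln (hext f x)) s.
  apply: (@comp1 _ _ (hext f) (@ln R) s (hext f s)^-1) => //.
  exact: is_derive1_ln (Fpos s snz).
have dL : differentiable L s.
  apply: diffM'; first exact: diffcst.
  by apply: diffD' => //; exact: diffcst.
set c := expR (L s) * (2^-1 * (hext f s)^-1).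
have Dg : forall v, 'D_v (hext (gsq f)) s = c * 'D_v (hext f) s.
  move=> v.
  have -> : hext (gsq f) = fun x => expR (L x) by [].
  rewrite (@dcomp1 _ _ L expR s v (expR (L s))) // /L.
  rewrite dM; [|exact: diffcst|by apply: diffD' => //; exact: diffcst].
  rewrite dD; [|exact: diffcst|exact: dlnF].
  rewrite dcst (@dcomp1 _ _ (hext f) (@ln R) s v (hext f s)^-1 dF (is_derive1_ln (Fpos s snz))).
  rewrite dcst /c /L; ring.
have c2 : c ^+ 2 = (2 * f s)^-1.
  rewrite /c exprMn.
  have -> : expR (L s) ^+ 2 = 2 * f s by rewrite /L Fs; exact: (@gsq_sqr f s fs0).
  by rewrite Fs; field; exact: lt0r_neq0.
have -> : dotv (sgrad (gsq f) s) (sgrad (gsq f) s) = c ^+ 2 * dotv (sgrad f s) (sgrad f s).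
  by rewrite /dotv mulr_sumr; apply: eq_bigr => i _; rewrite /sgrad !mxE !Dg; ring.
by rewrite c2; field; exact: lt0r_neq0.
Qed.

End MainAux.

Theorem lemma5p3 (R : realType) (d : nat) (hd : (2 <= d)%N) (b : R -> R)
  (hb : angular_kernel d b) (cK CP : R) (hcK : 0 < cK) (hCP : 0 < CP)
  (HK : forall f : 'rV[R]_d -> R, even_pos_smooth f ->
     sphere_int (fun s => Gamma2 b (fun x => ln (f x)) (fun x => ln (f x)) s * f s)
     >= cK * sphere_int (fun s => dotv (sgrad f s) (sgrad f s) / f s))
  (HP : forall f : 'rV[R]_d -> R, even_pos_smooth f ->
     ((CP * sphere_int (fun s => dotv (sgrad f s) (sgrad f s)))%:E
     >= sphere_intE (fun s => sphere_intE (fun s' =>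
          ((f s' - f s) ^+ 2 * b (dotv s' s))%:E)))%E) :
  forall f : 'rV[R]_d -> R, even_pos_smooth f ->
    ((sphere_int (fun s => Gamma2 b (fun x => ln (f x)) (fun x => ln (f x)) s * f s))%:E
    >= ((2 * cK / CP)%:E *
        sphere_intE (fun s => sphere_intE (fun s' =>
          ((f s' - f s) ^+ 2 / (f s' + f s) * b (dotv s' s))%:E))))%E.
Proof.
move=> f fE; have [sf [fp fev]] := fE.
have hb0 : forall t, -1 <= t <= 1 -> 0 <= b t by case: hb => _ [].
set g := gsq f.
have gE : even_pos_smooth g.
  split; first exact: gsq_smooth.
  split; first by move=> s _; exact: gsq_pos.
  by move=> s ss; rewrite /g /gsq fev.
have HPg := HP g gE.
set I := sphere_int (fun s => dotv (sgrad f s) (sgrad f s) / f s).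
have eI : sphere_int (fun s => dotv (sgrad g s) (sgrad g s)) = 2^-1 * I.
  rewrite /I -sphere_int_scale; last by rewrite invr_gt0.
  by apply: sphere_int_eq => s ss; exact: gsq_grad.
rewrite eI in HPg.
set J' := sphere_intE _.
have J'le : (J' <= sphere_intE (fun s => sphere_intE (fun s' =>
          ((g s' - g s) ^+ 2 * b (dotv s' s))%:E)))%E.
  apply: sphere_intE_le => s ss; apply: sphere_intE_le => s' ss'.
  rewrite lee_fin; apply: ler_wpM2r; first by apply: hb0; exact: dotv_bound.
  have e1 : f s' = g s' ^+ 2 / 2 by rewrite gsq_sqr ?fp // mulrC mulKf.
  have e2 : f s = g s ^+ 2 / 2 by rewrite gsq_sqr ?fp // mulrC mulKf.
  rewrite e1 e2; apply: key_ineq; exact: gsq_pos.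
have HKf := HK f fE.
apply: le_trans (_ : ((2 * cK / CP)%:E * (CP * (2^-1 * I))%:E <= _)%E).
  apply: lee_wpmul2l; first by rewrite lee_fin divr_ge0 // ?mulr_ge0 // ltW.
  exact: le_trans J'le HPg.
rewrite -EFinM lee_fin.
have -> : 2 * cK / CP * (CP * (2^-1 * I)) = cK * I by field; exact: lt0r_neq0.
exact: HKf.
Qed.
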